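(* Let $\mathcal A$ be a linearly ordered $\mathbf{UL}_\omega$-algebra and let $B=\{p_1,\dots,p_k\}\subseteq A$. Let $$M=\Big\{\prod_{i=1}^kp_i^{\alpha(i)}:\alpha\in\mathbb N^k\Big\},$$ and for $a\in M$ and $b\in B$ let $(a\mapsto b]=\{c\in M: ac\le b\}$. For every $p\in B$, let $M\Rightarrow p=\{(m\mapsto p]: m\in M\}$. Then: (i) $M\Rightarrow p$ is linearly ordered under set inclusion; (ii) $M\Rightarrow p$ is finite.
   Context: A $\mathbf{UL}$-algebra is a structure $\langle A,\wedge,\vee,\cdot,\to,e,f,\bot,\top\rangle$ such that: - $\langle A,\wedge,\vee,\bot,\top\rangle$ is a bounded lattice; - $\langle A,\cdot,e\rangle$ is a commutative monoid; - $xy\le z$ iff $y\le x\to z$; - for all $x,y,u,v$: $\lambda_u((x\vee y)\to x)\vee\lambda_v((x\vee y)\to y)=e$, where $\lambda_a(b)=(a\to ba)\wedge e$. A $\mathbf{UL}_\omega$-algebra is a $\mathbf{UL}$-algebra satisfying $x\to e=x^2\to e$ for all $x$. This class includes all $\mathbf{IUL}_\omega$-algebras. Powers: $x^0=e$, $x^{n+1}=x^nx$. $\mathbb N=\{0,1,2,\dots\}$, and $\alpha(i)$ is the $i$-th component of $\alpha\in\mathbb N^k$. *)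

(* Defs.v *)
From mathcomp Require Import all_boot.
Set Implicit Arguments. Unset Strict Implicit. Unset Printing Implicit Defensive.

Record ULalg := {
  car :> Type;
  meet : car -> car -> car;
  join : car -> car -> car;
  mul  : car -> car -> car;
  imp  : car -> car -> car;
  e : car; f : car; bot : car; top : car;
  meetA : forall x y z, meet x (meet y z) = meet (meet x y) z;
  joinA : forall x y z, join x (join y z) = join (join x y) z;
  meetC : forall x y, meet x y = meet y x;
  joinC : forall x y, join x y = join y x;
  meet_absorb : forall x y, meet x (join x y) = x;
  join_absorb : forall x y, join x (meet x y) = x;
  join_bot : forall x, join bot x = x;
  meet_top : forall x, meet top x = x;
  mulA : forall x y z, mul x (mul y z) = mul (mul x y) z;
  mulC : forall x y, mul x y = mul y x;
  mul_e : forall x, mul e x = x;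
  (* residuation: xy <= z iff y <= x -> z, with u <= v := join u v = v *)
  residuation : forall x y z, join (mul x y) z = z <-> join y (imp x z) = imp x z;
  (* prelinearity: lambda_u((x v y) -> x) v lambda_v((x v y) -> y) = e,
     lambda_a(b) = (a -> b a) /\ e *)
  prelin : forall x y u v,
    join (meet (imp u (mul (imp (join x y) x) u)) e)
         (meet (imp v (mul (imp (join x y) y) v)) e) = e
}.

Section Ops.
Variable A : ULalg.

Definition le (x y : A) : Prop := join x y = y.

Definition ULomega : Prop := forall x : A, imp x (e A) = imp (mul x x) (e A).

Definition linearly_ordered : Prop := forall x y : A, le x y \/ le y x.

Fixpoint pw (x : A) (n : nat) : A :=
  match n with 0 => e A | n'.+1 => mul (pw x n') x end.

Definition mprod (k : nat) (p : 'I_k -> A) (alpha : 'I_k -> nat) : A :=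
  foldr (fun i acc => mul acc (pw (p i) (alpha i))) (e A) (enum 'I_k).

Definition inM (k : nat) (p : 'I_k -> A) (a : A) : Prop :=
  exists alpha : 'I_k -> nat, a = mprod p alpha.

Definition seg (k : nat) (p : 'I_k -> A) (a b : A) : A -> Prop :=
  fun c => inM p c /\ le (mul a c) b.

Definition incl_set (X Y : A -> Prop) : Prop := forall c, X c -> Y c.
Definition same_set (X Y : A -> Prop) : Prop := forall c, X c <-> Y c.
End Ops.

(* Main.v *)
Require Import Defs.
From mathcomp Require Import all_boot zify.
From Stdlib Require Import Classical ClassicalEpsilon.
Set Implicit Arguments. Unset Strict Implicit. Unset Printing Implicit Defensive.
Local Notation "x ** y" := (Defs.mul x y) (at level 40, left associativity).

Lemma le_refl (A : ULalg) (x : A) : le x x.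
Proof.
rewrite /le. have H := meet_absorb x x. rewrite -{2}H. by rewrite join_absorb.
Qed.

Lemma le_trans (A : ULalg) (x y z : A) : le x y -> le y z -> le x z.
Proof. rewrite /le => H1 H2. by rewrite -H2 joinA H1. Qed.

Lemma resP (A : ULalg) (x y z : A) : le (x ** y) z <-> le y (imp x z).
Proof. exact: residuation. Qed.

Lemma mul_mono (A : ULalg) (x y z : A) : le x y -> le (z ** x) (z ** y).
Proof.
move=> H. apply/resP. apply: le_trans H _. apply/resP. exact: le_refl.
Qed.

Lemma mul_e_r (A : ULalg) (x : A) : x ** e A = x.
Proof. by rewrite mulC mul_e. Qed.

Lemma om (A : ULalg) (Hom : ULomega A) (x w : A) :
  le (x ** (x ** w)) (e A) <-> le (x ** w) (e A).
Proof. rewrite mulA !resP. by rewrite -Hom. Qed.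

Lemma pw_sup (A : ULalg) (Hom : ULomega A) (x : A) a z : 0 < a ->
  (le (pw x a ** z) (e A) <-> le (x ** z) (e A)).
Proof.
elim: a z => [//|[|a] IH] z _.
  by rewrite /= mul_e.
have -> : pw x a.+2 ** z = pw x a.+1 ** (x ** z) by rewrite /= -mulA.
rewrite IH //. exact: om.
Qed.

Lemma pw_eq_sup (A : ULalg) (Hom : ULomega A) (x : A) a b z :
  (a == 0) = (b == 0) -> (le (pw x a ** z) (e A) <-> le (pw x b ** z) (e A)).
Proof.
case: a => [|a]; case: b => [|b] //= _.
rewrite (pw_sup Hom x (a:=a.+1)) // (pw_sup Hom x (a:=b.+1)) //.
Qed.

Definition F (A : ULalg) k (p : 'I_k -> A) (s : seq 'I_k) (al : 'I_k -> nat) : A :=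
  foldr (fun i acc => acc ** pw (p i) (al i)) (e A) s.

Lemma F_sup (A : ULalg) (Hom : ULomega A) k (p : 'I_k -> A) s al be :
  (forall i, (al i == 0) = (be i == 0)) ->
  forall y, le (F p s al ** y) (e A) <-> le (F p s be ** y) (e A).
Proof.
move=> Hz; elim: s => [|i s IH] y //=.
rewrite -!mulA IH.
rewrite (mulA (F p s be)) (mulC (F p s be)) -mulA.
rewrite (@pw_eq_sup A Hom (p i) _ _ _ (Hz i)).
by rewrite mulA (mulC _ (F p s be)) -mulA.
Qed.

Lemma pw_add (A : ULalg) (x : A) m n : pw x (m + n) = pw x m ** pw x n.
Proof.
elim: n => [|n IH]; first by rewrite addn0 /= mul_e_r.
by rewrite addnS /= IH mulA.
Qed.

Lemma F_add (A : ULalg) k (p : 'I_k -> A) s al be :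
  F p s (fun i => al i + be i) = F p s al ** F p s be.
Proof.
elim: s => [|i s IH] /=; first by rewrite mul_e.
rewrite IH pw_add.
rewrite -!mulA; congr (_ ** _).
rewrite mulC -!mulA; congr (_ ** _).
by rewrite mulC.
Qed.

Lemma F_ext (A : ULalg) k (p : 'I_k -> A) s al be :
  (forall i, al i = be i) -> F p s al = F p s be.
Proof. move=> H; elim: s => [|i s IH] //=. by rewrite IH H. Qed.
Lemma min_exists (a : nat -> nat) j :
  exists j', j < j' /\ forall i, j < i -> a j' <= a i.
Proof.
suff H : forall v i, j < i -> a i <= v -> exists j', j < j' /\ forall i, j < i -> a j' <= a i.
  exact: (H (a j.+1) j.+1).
elim=> [|v IH] i Hi Hv.
  exists i; split=> // i' _. by move: Hv; rewrite leqn0 => /eqP ->.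
case: (classic (exists i', j < i' /\ a i' < a i)) => [[i' [Hi' Hlt]]|Hn].
  apply: (IH i') => //. lia.
exists i; split=> // i' Hi'. rewrite leqNgt; apply/negP => Hlt. apply: Hn. by exists i'.
Qed.

Lemma oneD (a : nat -> nat) :
  exists psi : nat -> nat, (forall n, psi n < psi n.+1) /\ forall n, a (psi n) <= a (psi n.+1).
Proof.
pose nxt j := proj1_sig (constructive_indefinite_description _ (min_exists a j)).
have Hn j : j < nxt j /\ forall i, j < i -> a (nxt j) <= a i.
  exact: (proj2_sig (constructive_indefinite_description _ (min_exists a j))).
exists (fun n => iter n.+1 nxt 0); split=> n.
  by case: (Hn (iter n.+1 nxt 0)).
rewrite !iterS. set x := iter n nxt 0.
case: (Hn x) => H1 H2.
apply: H2. case: (Hn (nxt x)) => H3 _. lia.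
Qed.

Lemma incr_mono (phi : nat -> nat) : (forall n, phi n < phi n.+1) -> forall m n, m < n -> phi m < phi n.
Proof.
move=> H m n; elim: n => [//|n IH] Hmn.
rewrite ltnS leq_eqVlt in Hmn; case/orP: Hmn => [/eqP ->|Hmn]; first exact: H.
exact: ltn_trans (IH Hmn) (H n).
Qed.

Lemma nondec_mono (u : nat -> nat) : (forall n, u n <= u n.+1) -> forall m n, m <= n -> u m <= u n.
Proof.
move=> H m n; elim: n => [|n IH] Hmn; first by move: Hmn; rewrite leqn0 => /eqP ->.
rewrite leq_eqVlt in Hmn; case/orP: Hmn => [/eqP ->//|Hmn].
exact: leq_trans (IH Hmn) (H n).
Qed.

Lemma dick_sub k (s : seq 'I_k) (f : nat -> 'I_k -> nat) :
  exists phi : nat -> nat, (forall n, phi n < phi n.+1) /\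
    forall l, l \in s -> forall n, f (phi n) l <= f (phi n.+1) l.
Proof.
elim: s => [|l0 s [phi [Hp Hf]]]; first by exists id.
have [psi [Hps Ha]] := oneD (fun n => f (phi n) l0).
exists (fun n => phi (psi n)); split=> [n|l].
  exact: incr_mono.
rewrite inE => /orP [/eqP ->|Hl] n; first exact: Ha.
apply: (nondec_mono (u := fun n => f (phi n) l)); first exact: Hf.
exact: ltnW.
Qed.

Lemma dickson k (f : nat -> 'I_k -> nat) :
  exists j j', j < j' /\ forall l, f j l <= f j' l.
Proof.
have [phi [Hp Hf]] := dick_sub (enum 'I_k) f.
exists (phi 0), (phi 1); split; first exact: Hp.
move=> l; apply: Hf; by rewrite mem_enum.
Qed.

Definition bump k (al : 'I_k -> nat) (i : 'I_k) := fun l => al l + (l == i).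


Lemma coord_bound k (D : ('I_k -> nat) -> Prop)
  (Hext : forall al be, (forall l, al l = be l) -> (D al <-> D be))
  (Hnc : forall a1 d1 a2 d2, (forall l, (d1 l == 0) = (d2 l == 0)) ->
          D a1 -> ~ D (fun l => a1 l + d1 l) -> ~ D a2 -> D (fun l => a2 l + d2 l) -> False)
  (i : 'I_k) :
  exists N, forall al, N <= al i -> (D al <-> D (bump al i)).
Proof.
apply: NNPP => Hno.
have H : forall N, exists al, N <= al i /\ ~ (D al <-> D (bump al i)).
  move=> N; apply: NNPP => Hn; apply: Hno; exists N => al HN.
  apply: NNPP => Hc; apply: Hn; by exists al.
pose c N := proj1_sig (constructive_indefinite_description _ (H N)).
have Hc N : N <= c N i /\ ~ (D (c N) <-> D (bump (c N) i)).
  exact: (proj2_sig (constructive_indefinite_description _ (H N))).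
pose g j := iter j (fun al => c (al i + 2)) (c 0).
have Hg j : ~ (D (g j) <-> D (bump (g j) i)).
  case: j => [|j]; [exact: (Hc 0).2 | exact: (Hc _).2].
have Hgi : forall j d, g j i + 2 <= g (d.+1 + j) i.
  move=> j; elim=> [|d IH].
    exact: (Hc _).1.
  change (g j i + 2 <= c (g (d.+1 + j) i + 2) i).
  have := (Hc (g (d.+1 + j) i + 2)).1. lia.
have [j [j' [Hjj Hle]]] := dickson (fun j l => if l == i then 0 else g j l).
have Hij : g j i + 2 <= g j' i.
  have -> : j' = (j' - j).-1.+1 + j by lia. exact: Hgi.
set a := g j in Hg Hij Hle *. set b := g j' in Hij Hle *.
have Ha := Hg j. have Hb := Hg j'. rewrite -/a -/b in Ha Hb.
have Hol : forall l, l != i -> a l <= b l.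
  move=> l Hl. have := Hle l. by rewrite (negbTE Hl).
have Hsupp : forall l, ((b l + (l == i) - a l) == 0) = ((b l - (a l + (l == i))) == 0).
  move=> l. case: (eqVneq l i) => [->|Hl].
    apply/idP/idP; lia.
  have := Hol l Hl. rewrite ?(negbTE Hl) /=. lia.
have Hsupp1 : forall l, ((l == i) : nat) == 0 = (((l == i) : nat) == 0) by [].
case: (classic (D a)) => Da; case: (classic (D b)) => Db.
-
  have nDa' : ~ D (bump a i) by move=> H1; apply: Ha; split.
  have nDb' : ~ D (bump b i) by move=> H1; apply: Hb; split.
  apply: (Hnc a (fun l => b l + (l == i) - a l) (bump a i) (fun l => b l - (a l + (l == i)))) => //.
  + move=> H1; apply: nDb'; apply: (proj1 (Hext _ _ _) H1) => l. rewrite /bump.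
    case: (eqVneq l i) => [->|Hl]; first lia. have := Hol l Hl. rewrite ?(negbTE Hl) /=. lia.
  + apply: (proj1 (Hext _ _ _) Db) => l. rewrite /bump.
    case: (eqVneq l i) => [->|Hl]; first lia. have := Hol l Hl. rewrite ?(negbTE Hl) /=. lia.
- have Da' : ~ D (bump a i) by move=> H1; apply: Ha; split.
  have Db' : D (bump b i) by apply: NNPP => H1; apply: Hb; split.
  apply: (Hnc a (fun l => (l == i) : nat) b (fun l => (l == i) : nat)) => //.
- have Da' : D (bump a i) by apply: NNPP => H1; apply: Ha; split.
  have Db' : ~ D (bump b i) by move=> H1; apply: Hb; split.
  apply: (Hnc b (fun l => (l == i) : nat) a (fun l => (l == i) : nat)) => //.
- have Da' : D (bump a i) by apply: NNPP => H1; apply: Ha; split.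
  have Db' : D (bump b i) by apply: NNPP => H1; apply: Hb; split.
  apply: (Hnc (bump a i) (fun l => b l - (a l + (l == i))) a (fun l => b l + (l == i) - a l)).
  + move=> l; by rewrite Hsupp.
  + exact: Da'.
  + move=> H1; apply: Db; apply: (proj1 (Hext _ _ _) H1) => l. rewrite /bump.
    case: (eqVneq l i) => [->|Hl]; first lia. have := Hol l Hl. rewrite ?(negbTE Hl) /=. lia.
  + exact: Da.
  + apply: (proj1 (Hext _ _ _) Db') => l. rewrite /bump.
    case: (eqVneq l i) => [->|Hl]; first lia. have := Hol l Hl. rewrite ?(negbTE Hl) /=. lia.
Qed.

Lemma trunc_all k (D : ('I_k -> nat) -> Prop)
  (Hext : forall al be, (forall l, al l = be l) -> (D al <-> D be)) N
  (HN : forall l al, N <= al l -> (D al <-> D (bump al l))) :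
  forall al, D al <-> D (fun l => minn (al l) N).
Proof.
have trunc1 : forall l0 be, D be <-> D (fun l => if l == l0 then minn (be l) N else be l).
  move=> l0.
  have Hset : forall d be, be l0 = N + d -> (D be <-> D (fun l => if l == l0 then N else be l)).
    elim=> [|d IH] be Hb.
      apply: Hext => l. case: (eqVneq l l0) => [->|//]. lia.
    pose be' := fun l => if l == l0 then N + d else be l.
    have E1 : D be <-> D (bump be' l0).
      apply: Hext => l. rewrite /bump /be'. case: (eqVneq l l0) => [->|] /=; lia.
    rewrite E1 -HN; last by rewrite /be' eqxx; lia.
    rewrite IH; last by rewrite /be' eqxx.
    apply: Hext => l. rewrite /be'. by case: (eqVneq l l0).
  move=> be. case: (leqP (be l0) N) => Hb.
    apply: Hext => l. case: (eqVneq l l0) => [->|//]. lia.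
  rewrite (Hset (be l0 - N) be); last lia.
  apply: Hext => l. case: (eqVneq l l0) => [->|//]. lia.
have Hs : forall (s : seq 'I_k) be, D be <-> D (fun l => if l \in s then minn (be l) N else be l).
  elim=> [|l0 s IH] be.
    by apply: Hext.
  rewrite IH (trunc1 l0). apply: Hext => l. rewrite inE.
  case: (eqVneq l l0) => [->|Hn] /=; last by []. case: (l0 \in s); lia.
move=> al. rewrite (Hs (enum 'I_k)). apply: Hext => l. by rewrite mem_enum.
Qed.

Theorem lemma4p7 (A : ULalg) (Hom : ULomega A) (Hlin : linearly_ordered A)
  (k : nat) (p : 'I_k -> A) (j : 'I_k) :
  (* (i) M => p_j is linearly ordered under inclusion *)
  (forall m1 m2 : A, inM p m1 -> inM p m2 ->
     incl_set (seg p m1 (p j)) (seg p m2 (p j)) \/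
     incl_set (seg p m2 (p j)) (seg p m1 (p j))) /\
  (* (ii) M => p_j is finite: finitely many m_1..m_n in M represent all its members *)
  (exists (n : nat) (ms : 'I_n -> A), (forall i, inM p (ms i)) /\
     forall m, inM p m -> exists i : 'I_n,
       same_set (seg p m (p j)) (seg p (ms i) (p j))).
Proof.
split.
  move=> m1 m2 _ _. case: (Hlin m1 m2) => H.
    right=> c [Hc Hle]; split=> //. apply: le_trans Hle.
    rewrite (mulC m1) (mulC m2). exact: mul_mono.
  left=> c [Hc Hle]; split=> //. apply: le_trans Hle.
  rewrite (mulC m1) (mulC m2). exact: mul_mono.
pose D (al : 'I_k -> nat) := le (mprod p al) (p j).
have mprodF : forall al, mprod p al = F p (enum 'I_k) al by [].
have Hext : forall al be, (forall l, al l = be l) -> (D al <-> D be).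
  move=> al be H. by rewrite /D !mprodF (F_ext _ _ H).
have Hnc : forall a1 d1 a2 d2, (forall l, (d1 l == 0) = (d2 l == 0)) ->
          D a1 -> ~ D (fun l => a1 l + d1 l) -> ~ D a2 -> D (fun l => a2 l + d2 l) -> False.
  move=> a1 d1 a2 d2 Hs D1 nD1 nD2 D2.
  rewrite /D !mprodF !F_add in D1 nD1 nD2 D2.
  have Hsup := F_sup Hom p (enum 'I_k) Hs (e A). rewrite !mul_e_r in Hsup.
  case: (classic (le (F p (enum 'I_k) d1) (e A))) => H1.
    apply: nD1. apply: le_trans D1. rewrite -{2}(mul_e_r (F p (enum 'I_k) a1)).
    exact: mul_mono.
  case: (Hlin (F p (enum 'I_k) d2) (e A)) => H2.
    by apply: H1; apply/Hsup.
  apply: nD2. apply: le_trans D2. rewrite -{1}(mul_e_r (F p (enum 'I_k) a2)).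
  exact: mul_mono.
have HNf i := proj2_sig (constructive_indefinite_description _ (coord_bound Hext Hnc i)).
set Nf := fun i => proj1_sig (constructive_indefinite_description _ (coord_bound Hext Hnc i)) in HNf.
pose N := \max_(i : 'I_k) Nf i.
have HN : forall l al, N <= al l -> (D al <-> D (bump al l)).
  move=> l al H; apply: (HNf l); apply: leq_trans H. rewrite /N. have := @leq_bigmax _ Nf l. by [].

have Htr := trunc_all Hext HN.
have key : forall al g, D (fun l => al l + g l) <-> D (fun l => minn (al l) N + g l).
  move=> al g. rewrite Htr (Htr (fun l => minn (al l) N + g l)).
  apply: (Hext) => l. lia.
pose T := {ffun 'I_k -> 'I_N.+1}.
exists #|T|, (fun i => mprod p (fun l => nat_of_ord ((enum_val i : T) l))).
split.
  move=> i; by eexists.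
move=> m [al ->].
exists (enum_rank ([ffun l => inord (minn (al l) N)] : T)).
rewrite enum_rankK.
have -> : mprod p (fun l => nat_of_ord (([ffun l => inord (minn (al l) N)] : T) l))
   = mprod p (fun l => minn (al l) N).
  rewrite !mprodF; apply: F_ext => l. rewrite ffunE inordK //. rewrite ltnS; exact: geq_minr.
move=> c; split => -[[g ->] H]; (split; first by exists g); move: H;
  rewrite !mprodF -!F_add; by move/(key al g).
Qed.
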